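(* Let $\sigma\in\mathfrak S_k$ and $\tau\in\mathfrak S_{l}$ be consecutive patterns ($k,l\ge1$) with $A_\sigma(z)=A_\tau(z)$. Then $A_{12\text{-}\sigma}(z)=A_{12\text{-}\tau}(z)$, where for a consecutive pattern $\sigma=\sigma_1\cdots\sigma_k$, $12\text{-}\sigma$ denotes the generalized pattern $12\text{-}(\sigma_1+2)(\sigma_2+2)\cdots(\sigma_k+2)$.
   Context: $\mathfrak S_n$ is the symmetric group on $\{1,\dots,n\}$, permutations in one-line notation. A generalized pattern of length $m$ is a permutation $\sigma_1\cdots\sigma_m\in\mathfrak S_m$ with, between each pair of adjacent entries, either a dash ''-'' or nothing. A permutation $\pi\in\mathfrak S_n$ contains it if there are indices $i_1<\dots<i_m$ with $i_{j+1}=i_j+1$ whenever there is no dash between $\sigma_j$ and $\sigma_{j+1}$, and with $\pi_{i_a}<\pi_{i_b}$ iff $\sigma_a<\sigma_b$ for all $a,b$; otherwise $\pi$ avoids it. A consecutive pattern has no dashes. $\alpha_n(\sigma)$ is the number of permutations in $\mathfrak S_n$ avoiding $\sigma$ ($\alpha_0=1$) and $A_\sigma(z)=\sum_{n\ge0}\alpha_n(\sigma)z^n/n!$. *)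

(* Defs.v *)
From mathcomp Require Import all_boot all_order all_fingroup all_algebra.
Set Implicit Arguments. Unset Strict Implicit. Unset Printing Implicit Defensive.
Import GRing.Theory.
Local Open Scope ring_scope.

(* One-line notation of pi : 'S_n, with values in {0,...,n-1}
   (order-isomorphic to the paper's {1,...,n} convention). *)
Definition oneline n (pi : 'S_n) : seq nat := [seq val (pi i) | i <- enum 'I_n].

(* A generalized pattern is given by its one-line word [w] (of length m)
   and a dash predicate [dash]: [dash j] (j < m-1, 0-indexed) holds iff
   there is a dash between the entries w_j and w_{j+1}.
   [gcontains w dash pi]: there are indices i_0 < ... < i_{m-1} in pi
   with i_{j+1} = i_j + 1 whenever there is no dash between w_j, w_{j+1},
   and pi_{i_a} < pi_{i_b} iff w_a < w_b. *)
Definition gcontains (w : seq nat) (dash : nat -> bool) n (pi : 'S_n) : bool :=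
  [exists f : {ffun 'I_(size w) -> 'I_n},
    [forall a : 'I_(size w), forall b : 'I_(size w),
      [&& ((a < b)%N ==> (f a < f b)%N),
          (((a.+1 == b)%N && ~~ dash (val a)) ==> (val (f b) == (val (f a)).+1)) &
          ((pi (f a) < pi (f b))%N == (nth 0%N w a < nth 0%N w b)%N)]]].

Definition alpha (w : seq nat) (dash : nat -> bool) (n : nat) : nat :=
  #|[set pi : 'S_n | ~~ gcontains w dash pi]|.

(* Coefficient sequence of the exponential generating function
   A(z) = sum_n alpha_n z^n / n!; two formal power series are equal iff
   their coefficient functions are equal. *)
Definition egf (w : seq nat) (dash : nat -> bool) : nat -> rat :=
  fun n => (alpha w dash n)%:R / (n`!)%:R.

Definition consec_dash : nat -> bool := fun _ => false.

(* 12-sigma = 12-(sigma_1+2)...(sigma_k+2): one dash, between positions 1 and 2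
   (0-indexed), i.e. between the "2" and the first entry of the shifted sigma. *)
Definition twelve_word k (s : 'S_k) : seq nat := [:: 0%N, 1%N & map (addn 2) (oneline s)].
Definition twelve_dash : nat -> bool := fun j => j == 1%N.

(* Main.v *)
Require Import Defs.
From mathcomp Require Import all_boot all_order all_fingroup all_algebra.
From mathcomp Require Import zify.
Set Implicit Arguments. Unset Strict Implicit. Unset Printing Implicit Defensive.

Definition pv n (pi : 'S_n) (x : nat) : nat := nth 0 (oneline pi) x.

Lemma size_oneline n (pi : 'S_n) : size (oneline pi) = n.
Proof. by rewrite /oneline size_map size_enum_ord. Qed.

Lemma pvE n (pi : 'S_n) (x : 'I_n) : pv pi x = pi x.
Proof. by rewrite /pv /oneline (nth_map x) ?size_enum_ord ?nth_ord_enum. Qed.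

Lemma pv_out n (pi : 'S_n) x : n <= x -> pv pi x = 0.
Proof. by move=> h; rewrite /pv nth_default ?size_oneline. Qed.

Lemma pv_lt n (pi : 'S_n) x : x < n -> pv pi x < n.
Proof. by move=> h; rewrite (pvE pi (Ordinal h)). Qed.

Lemma pv_inj n (pi : 'S_n) x y : x < n -> y < n -> pv pi x = pv pi y -> x = y.
Proof.
move=> hx hy; rewrite (pvE pi (Ordinal hx)) (pvE pi (Ordinal hy)) => /val_inj/perm_inj.
by case.
Qed.

Definition gfun (w : seq nat) (dash : nat -> bool) n (pi : 'S_n) (g : nat -> nat) :=
  [/\ forall a, a < size w -> g a < n,
      forall a b, b < size w -> a < b -> g a < g b,
      forall a, a.+1 < size w -> ~~ dash a -> g a.+1 = (g a).+1 &
      forall a b, a < size w -> b < size w ->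
        (pv pi (g a) < pv pi (g b)) = (nth 0 w a < nth 0 w b)].

Lemma gcontainsP w dash n (pi : 'S_n) :
  reflect (exists g, gfun w dash pi g) (gcontains w dash pi).
Proof.
apply: (iffP existsP).
- move=> [f /forallP H].
  pose g x := if insub x is Some a then val (f a) else 0.
  have gE (a : 'I_(size w)) : g a = f a by rewrite /g valK.
  exists g; split.
  + by move=> a ha; rewrite (gE (Ordinal ha)).
  + move=> a b hb hab; have ha : a < size w by apply: ltn_trans hb.
    have := forallP (H (Ordinal ha)) (Ordinal hb).
    by case/and3P => /= /implyP /(_ hab) h _ _; rewrite (gE (Ordinal ha)) (gE (Ordinal hb)).
  + move=> a hb hd; have ha : a < size w by apply: ltnW.
    have := forallP (H (Ordinal ha)) (Ordinal hb).
    case/and3P => _ /= /implyP h _; rewrite (gE (Ordinal ha)) (gE (Ordinal hb)).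
    by apply/eqP; apply: h; rewrite eqxx hd.
  + move=> a b ha hb; have := forallP (H (Ordinal ha)) (Ordinal hb).
    case/and3P => _ _ /eqP /= <-.
    by rewrite (gE (Ordinal ha)) (gE (Ordinal hb)) !pvE.
- move=> [g [H1 H2 H3 H4]].
  exists [ffun a : 'I_(size w) => Ordinal (H1 a (ltn_ord a))].
  apply/forallP => a; apply/forallP => b; rewrite !ffunE /=.
  apply/and3P; split.
  + by apply/implyP => h; apply: H2.
  + apply/implyP => /andP[/eqP hab hd]; rewrite -hab H3 //; by rewrite hab.
  + have := H4 a b (ltn_ord a) (ltn_ord b).
    by rewrite (pvE pi (Ordinal (H1 a (ltn_ord a)))) (pvE pi (Ordinal (H1 b (ltn_ord b)))) => ->.
Qed.
From Stdlib Require Import FunctionalExtensionality.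

Definition markedp (p : nat -> nat) (x : nat) : bool :=
  has (fun i => (i.+1 < x) && (p i < p i.+1) && (p i.+1 < p x)) (iota 0 x).

Lemma markedP p x :
  reflect (exists i, [/\ i.+1 < x, p i < p i.+1 & p i.+1 < p x]) (markedp p x).
Proof.
apply: (iffP hasP).
- by move=> [i _ /andP[/andP[h1 h2] h3]]; exists i.
- move=> [i [h1 h2 h3]]; exists i; last by rewrite h1 h2 h3.
  by rewrite mem_iota /=; lia.
Qed.

Lemma argmin_window (p : nat -> nat) a b : a < b ->
  exists2 y, a <= y < b & forall z, a <= z < b -> p y <= p z.
Proof.
move=> hab; have [d ->] : exists d, b = a + d.+1 by exists (b - a).-1; lia.
elim: d => [|d [y hy hmin]].
  by exists a; [lia | move=> z hz; have -> : z = a by lia].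
case: (leqP (p y) (p (a + d.+1))) => h.
- exists y; first by lia.
  move=> z hz; case: (ltnP z (a + d.+1)) => hz'; first by apply: hmin; lia.
  by have -> : z = a + d.+1 by lia.
- exists (a + d.+1); first by lia.
  move=> z hz; case: (ltnP z (a + d.+1)) => hz'.
    by apply: leq_trans (ltnW h) (hmin z _); lia.
  by have -> : z = a + d.+1 by lia.
Qed.

Lemma low_ascent p a b : a < b -> (forall y, a <= y < b -> markedp p y) ->
  exists i, [/\ i.+1 < a, p i < p i.+1 & forall y, a <= y < b -> p i.+1 < p y].
Proof.
move=> hab hm; have [y0 hy0 hmin] := argmin_window p hab.
have /markedP [i [h1 h2 h3]] := hm y0 hy0.
case: (ltnP i.+1 a) => hia.
- exists i; split => // y hy; exact: leq_trans h3 (hmin y hy).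
- have : p y0 <= p i.+1 by apply: hmin; lia.
  by rewrite leqNgt h3.
Qed.

Lemma transfer1 p p' a b :
  (forall x, ~~ (a <= x < b) -> p' x = p x) ->
  (forall x, a <= x < b -> exists2 y, a <= y < b & p' x = p y) ->
  (exists i, [/\ i.+1 < a, p i < p i.+1 & forall y, a <= y < b -> p i.+1 < p y]) ->
  ~~ markedp p b ->
  forall x, markedp p' x -> markedp p x.
Proof.
move=> H1 H2 [i0 [h0 h0' h0'']] H4 x /markedP [i [hi1 hi2 hi3]]; apply/markedP.
case: (boolP (a <= x < b)) => hx.
  by exists i0; split => //; [lia | exact: h0''].
rewrite (H1 x hx) in hi3.
case: (boolP (a <= i.+1 < b)) => hi.
  have [y hy ey] := H2 _ hi; exists i0; split => //; first by lia.
  by apply: ltn_trans (h0'' y hy) _; rewrite -ey.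
rewrite (H1 _ hi) in hi2 hi3.
case: (boolP (a <= i < b)) => hii; last first.
  by exists i; split => //; rewrite -(H1 _ hii).
have eb : i.+1 = b by lia.
have [y hy ey] := H2 _ hii.
case/negP: H4; apply/markedP; exists i0; split => //; first by lia.
rewrite -eb; apply: ltn_trans (h0'' y hy) _; by rewrite -ey.
Qed.

Lemma transfer p p' a b :
  (forall x, ~~ (a <= x < b) -> p' x = p x) ->
  (forall x, a <= x < b -> exists2 y, a <= y < b & p' x = p y) ->
  (forall y, a <= y < b -> exists2 x, a <= x < b & p y = p' x) ->
  a < b -> (forall y, a <= y < b -> markedp p y) ->
  ~~ markedp p b ->
  forall x, markedp p' x = markedp p x.
Proof.
move=> H1 H2 H2' hab hm H4.
have [i0 [h1 h2 h3]] := low_ascent hab hm.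
have d1 := transfer1 H1 H2 (ex_intro _ i0 (And3 h1 h2 h3)) H4.
have H4' : ~~ markedp p' b by apply/negP => /d1; rewrite (negbTE H4).
have H1' x : ~~ (a <= x < b) -> p x = p' x by move=> h; rewrite H1.
have e0 : p' i0 = p i0 by apply: H1; lia.
have e1 : p' i0.+1 = p i0.+1 by apply: H1; lia.
have asc : exists i, [/\ i.+1 < a, p' i < p' i.+1 & forall y, a <= y < b -> p' i.+1 < p' y].
  exists i0; split => //; first by rewrite e0 e1.
  by move=> y hy; have [z hz ->] := H2 y hy; rewrite e1; apply: h3.
have d2 := transfer1 H1' H2' asc H4'.
by move=> x; apply/idP/idP; [apply: d1 | apply: d2].
Qed.

Fixpoint sta (m : nat -> bool) (e : nat) : nat :=
  if e is e'.+1 then (if m e' then sta m e' else e) else 0.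

Lemma sta_le (m : nat -> bool) e : sta m e <= e.
Proof. elim: e => //= e IH; case: (m e) => //; exact: leqW. Qed.

Lemma sta_mark (m : nat -> bool) e x : sta m e <= x < e -> m x.
Proof.
elim: e => [|e IH] /=; first by lia.
case he: (m e) => h; last by lia.
case: (ltnP x e) => hx; first by apply: IH; lia.
by have -> : x = e by lia.
Qed.

Lemma sta_max (m : nat -> bool) e x : x <= e -> (forall y, x <= y < e -> m y) -> sta m e <= x.
Proof.
elim: e => [|e IH] /= hx hm; first by lia.
case: (ltnP x e.+1) => hx'; last by case: (m e) => //; have := sta_le m e; lia.
rewrite hm; last by lia.
by apply: IH; [lia | move=> y hy; apply: hm; lia].
Qed.

Lemma sta_ext (m1 m2 : nat -> bool) e : m1 =1 m2 -> sta m1 e = sta m2 e.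
Proof. by move=> h; elim: e => //= e ->; rewrite h. Qed.

Definition isoW (p : nat -> nat) (j : nat) (r : nat -> nat) (k : nat) : bool :=
  [forall a : 'I_k, forall b : 'I_k, (p (j + a) < p (j + b)) == (r a < r b)].

Lemma consecP k L (rho : 'S_k) (q : 'S_L) : 0 < k ->
  gcontains (oneline rho) consec_dash q =
  [exists j : 'I_L, (j + k <= L) && isoW (pv q) j (pv rho) k].
Proof.
move=> hk; apply/gcontainsP/existsP.
- move=> [g [H1 H2 H3 H4]]; rewrite size_oneline in H1 H2 H3 H4.
  have gE u : u < k -> g u = g 0 + u.
    elim: u => [|u IH] hu; first by rewrite addn0.
    by rewrite H3 // IH ?addnS //; apply: ltnW.
  have hj : g 0 < L := H1 0 hk.
  exists (Ordinal hj); apply/andP; split => /=.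
    have hk1 : k.-1 < k by rewrite ltn_predL.
    have := H1 k.-1 hk1; rewrite gE //; lia.
  apply/forallP => a; apply/forallP => b; apply/eqP.
  by rewrite -!gE //; apply: H4.
- move=> [j /andP[hj hiso]]; exists (fun a => j + a); split; rewrite ?size_oneline.
  + by move=> a ha; lia.
  + by move=> a b _ hab; lia.
  + by move=> a _ _; rewrite addnS.
  + move=> a b ha hb.
    by have := eqP (forallP (forallP hiso (Ordinal ha)) (Ordinal hb)).
Qed.

Lemma size_twelve k (rho : 'S_k) : size (twelve_word rho) = k.+2.
Proof. by rewrite /= size_map size_oneline. Qed.

Lemma nth_twelve k (rho : 'S_k) u : u < k ->
  nth 0 (twelve_word rho) u.+2 = 2 + pv rho u.
Proof. by move=> hu; rewrite /= (nth_map 0) ?size_oneline. Qed.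

Lemma twelveP n k (rho : 'S_k) (pi : 'S_n) : 0 < k ->
  gcontains (twelve_word rho) twelve_dash pi =
  [exists j : 'I_n, [&& j + k <= n,
     [forall u : 'I_k, markedp (pv pi) (j + u)] & isoW (pv pi) j (pv rho) k]].
Proof.
move=> hk; apply/gcontainsP/existsP.
- move=> [g [H1 H2 H3 H4]]; rewrite size_twelve in H1 H2 H3 H4.
  have g1 : g 1 = (g 0).+1 by apply: H3.
  have gE u : u < k -> g u.+2 = g 2 + u.
    elim: u => [|u IH] hu; first by rewrite addn0.
    by rewrite H3 // IH ?addnS //; apply: ltnW.
  have hj : g 2 < n by apply: H1.
  have h01 : pv pi (g 0) < pv pi (g 1) by rewrite H4.
  have h1u u : u < k -> pv pi (g 1) < pv pi (g 2 + u).
    by move=> hu; rewrite -gE // H4 // nth_twelve.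
  exists (Ordinal hj); apply/and3P; split => /=.
  + have hk1 : k.-1 < k by rewrite ltn_predL.
    have := H1 k.-1.+2; rewrite gE //; move/(_ hk1); lia.
  + apply/forallP => u; apply/markedP; exists (g 0); split.
    * have h2 : 2 < k.+2 by lia.
      have := H2 1 2 h2 isT; rewrite g1; lia.
    * by rewrite -g1.
    * by rewrite -g1; apply: h1u.
  + apply/forallP => a; apply/forallP => b; apply/eqP.
    rewrite -!gE // H4 ?ltnS //.
    by rewrite (nth_twelve rho (ltn_ord a)) (nth_twelve rho (ltn_ord b)) ltn_add2l.
- move=> [j /and3P[hjk hm hiso]].
  have hm' y : j <= y < j + k -> markedp (pv pi) y.
    move=> hy; have hu : y - j < k by lia.
    by have := forallP hm (Ordinal hu); rewrite /= subnKC //; case/andP: hy.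
  have hjk2 : j < j + k by rewrite -addn1 leq_add2l.
  have [i [hi1 hp1 hp2]] := low_ascent hjk2 hm'.
  have hp2' u : u < k -> pv pi i.+1 < pv pi (j + u) by move=> hu; apply: hp2; lia.
  have hp3 u : u < k -> pv pi i < pv pi (j + u) by move=> hu; apply: ltn_trans hp1 (hp2' u hu).
  exists (fun x => match x with 0 => i | 1 => i.+1 | x'.+2 => j + x' end).
  split; rewrite ?size_twelve.
  + by case=> [|[|a]] ha; lia.
  + by case=> [|[|a]] [|[|b]] hb hab //=; lia.
  + by case=> [|[|a]] //= ha _; rewrite addnS.
  + have hn u : u < k -> nth 0 [seq 2 + i | i <- oneline rho] u = 2 + pv rho u.
      by move=> hu; rewrite (nth_map 0) ?size_oneline.
    case=> [|[|a]] [|[|b]] ha hb /=.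
    * by rewrite ltnn.
    * by rewrite hp1.
    * by rewrite hn // hp3.
    * by rewrite ltnNge ltnW.
    * by rewrite ltnn.
    * by rewrite hn // hp2'.
    * by rewrite hn // ltnNge ltnW // hp3.
    * by rewrite hn // ltnNge ltnW // hp2'.
    * have ha' : a < k by lia.
      have hb' : b < k by lia.
      rewrite !hn // ltn_add2l.
      by have := eqP (forallP (forallP hiso (Ordinal ha')) (Ordinal hb')).
Qed.

Definition mk n (pi : 'S_n) := markedp (pv pi).
Definition runend n (pi : 'S_n) e := mk pi e && ~~ mk pi e.+1.
Definition RA n (pi : 'S_n) (e : nat) (r : nat -> nat) k :=
  [forall j : 'I_n, ((sta (mk pi) e.+1 <= j) && (j + k <= e.+1)) ==>
                    ~~ isoW (pv pi) j r k].

Lemma mk_out n (pi : 'S_n) x : n <= x -> ~~ mk pi x.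
Proof. by move=> h; rewrite /mk; apply/negP => /markedP [i [_ _]]; rewrite (pv_out pi h). Qed.

Lemma mk_lt n (pi : 'S_n) x : mk pi x -> x < n.
Proof. by move=> h; rewrite ltnNge; apply/negP => /(mk_out pi); rewrite h. Qed.

Lemma avoid12 n k (rho : 'S_k) (pi : 'S_n) : 0 < k ->
  ~~ gcontains (twelve_word rho) twelve_dash pi =
  [forall e : 'I_n, runend pi e ==> RA pi e (pv rho) k].
Proof.
move=> hk; rewrite twelveP //; apply/idP/idP.
- move=> hno; apply/forallP => e; apply/implyP => /andP[he1 he2].
  apply/forallP => j; apply/implyP => /andP[hj1 hj2]; apply/negP => hiso.
  case/negP: hno; apply/existsP; exists j; apply/and3P; split => //.
  + have := ltn_ord e; lia.
  + apply/forallP => u;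
 apply: (@sta_mark (mk pi) e.+1 (j + u)).
    by apply/andP; split; [apply: leq_trans hj1 (leq_addr _ _)|
                           have := ltn_ord u; lia].
- move=> /forallP H; apply/negP => /existsP [j /and3P[hjk hm hiso]].
  have exP : exists u, ~~ mk pi u && (j + k <= u).
    by exists n; rewrite hjk mk_out.
  case: (ex_minnP exP) => u0 /andP[hu1 hu2] hmin.
  have hall y : j <= y < u0 -> mk pi y.
    move=> hy; case: (ltnP y (j + k)) => hyk.
      have hu : y - j < k by lia.
      by have := forallP hm (Ordinal hu); rewrite /= subnKC //; case/andP: hy.
    apply/negPn/negP => hny.
    have := hmin y; rewrite hny hyk => /(_ isT); lia.
  have hu0n : u0 <= n by apply: hmin; rewrite hjk mk_out.
  have he : u0.-1 < n by lia.
  have := H (Ordinal he); rewrite /runend /= prednK; last by lia.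
  rewrite hu1 hall /=; last by lia.
  move=> /forallP /(_ j) /implyP; rewrite hiso => /(_ _)/negP; apply.
  have hpu : u0.-1.+1 = u0 by lia.
  rewrite hpu.
  rewrite hu2 andbT; apply: sta_max; first by lia.
  exact: hall.
  done.
Qed.

Section Count.
Variables (n : nat) (pi : 'S_n) (a L : nat).
Hypothesis haL : a + L <= n.

Definition Rint : {set 'I_n} := [set x : 'I_n | a <= x < a + L].

Lemma sh_lt (t : 'I_L) : a + t < n.
Proof. have := ltn_ord t; lia. Qed.

Definition sh (t : 'I_L) : 'I_n := Ordinal (sh_lt t).

Lemma sh_in t : sh t \in Rint.
Proof. rewrite inE /=; have := ltn_ord t; lia. Qed.

Lemma sh_inj : injective sh.
Proof. by move=> t1 t2 /(congr1 val) /= /addnI /val_inj. Qed.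

Lemma card_Rint : #|Rint| = L.
Proof.
have -> : Rint = sh @: setT.
  apply/setP => x; apply/idP/imsetP.
  - rewrite inE => hx; have ht : x - a < L by lia.
    exists (Ordinal ht); rewrite ?inE //; apply: val_inj => /=; lia.
  - by move=> [t _ ->]; apply: sh_in.
by rewrite card_imset ?cardsT ?card_ord //; apply: sh_inj.
Qed.

Definition rank (y : 'I_n) : nat := #|[set z : 'I_n | (z \in Rint) && (pi z < y)]|.

Lemma rank_le (y1 y2 : 'I_n) : y1 <= y2 -> rank y1 <= rank y2.
Proof.
move=> h; apply: subset_leq_card; apply/subsetP => z; rewrite !inE.
by case/andP => -> /= h'; apply: leq_trans h' h.
Qed.

Lemma rank_lt z1 (y2 : 'I_n) : z1 \in Rint -> pi z1 < y2 -> rank (pi z1) < rank y2.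
Proof.
move=> hz h; apply: proper_card; apply/properP; split.
  apply/subsetP => z; rewrite !inE; case/andP => -> /= h'; apply: ltn_trans h' h.
by exists z1; rewrite !inE ?h ?ltnn ?andbT ?andbF //; move: hz; rewrite inE.
Qed.

Lemma rank_mono z1 z2 : z1 \in Rint -> z2 \in Rint ->
  (rank (pi z1) < rank (pi z2)) = (pi z1 < pi z2).
Proof.
move=> h1 h2; case: (ltnP (pi z1) (pi z2)) => h; first by rewrite rank_lt.
by apply/negbTE; rewrite -leqNgt rank_le.
Qed.

Lemma rank_inj z1 z2 : z1 \in Rint -> z2 \in Rint ->
  rank (pi z1) = rank (pi z2) -> z1 = z2.
Proof.
move=> h1 h2 e; apply: (@perm_inj _ pi); apply: val_inj; apply/eqP.
rewrite eqn_leq; apply/andP; split; rewrite leqNgt.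
  by rewrite -(rank_mono h2 h1) e ltnn.
by rewrite -(rank_mono h1 h2) e ltnn.
Qed.

Lemma rank_bound z : z \in Rint -> rank (pi z) < L.
Proof.
move=> hz; rewrite -card_Rint; apply: proper_card; apply/properP; split.
  by apply/subsetP => y; rewrite inE; case/andP.
by exists z; rewrite // inE hz ltnn.
Qed.

Definition patf (s : 'S_n) : {ffun 'I_L -> 'I_L} :=
  [ffun t : 'I_L => insubd t (rank (pi (s (sh t))))].

Definition pat (s : 'S_n) : 'S_L :=
  match boolP (injectiveb (patf s)) with
  | AltTrue h => perm (injectiveP _ h)
  | AltFalse _ => 1%g
  end.

Lemma patf_val s t : perm_on Rint s -> val (patf s t) = rank (pi (s (sh t))).
Proof.
move=> hs; rewrite ffunE val_insubd rank_bound //.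
by rewrite (perm_closed _ hs) sh_in.
Qed.

Lemma patE s t : perm_on Rint s -> val (pat s t) = rank (pi (s (sh t))).
Proof.
move=> hs; have inj : injectiveb (patf s).
  apply/injectiveP => t1 t2 /(congr1 val); rewrite !patf_val //.
  move/rank_inj; rewrite !(perm_closed _ hs) !sh_in => /(_ isT isT).
  by move/perm_inj/sh_inj.
rewrite /pat; destruct (boolP (injectiveb (patf s))) as [h|h].
  by rewrite permE patf_val.
by rewrite inj in h.
Qed.

Lemma pat_inj : {in perm_on Rint &, injective pat}.
Proof.
move=> s1 s2 h1 h2 e; apply/permP => x.
case: (boolP (x \in Rint)) => hx; last by rewrite (out_perm h1 hx) (out_perm h2 hx).
have ht : x - a < L by move: hx; rewrite inE; lia.
have ex : x = sh (Ordinal ht) by apply: val_inj => /=; move: hx; rewrite inE; lia.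
have := patE (Ordinal ht) h1; rewrite e patE // => /esym E'.
have := rank_inj _ _ E'; rewrite (perm_closed _ h1) (perm_closed _ h2) sh_in.
by move=> /(_ isT isT); rewrite -ex.
Qed.

Lemma pat_onto : [set pat s | s in perm_on Rint] = setT.
Proof.
apply/eqP; rewrite eqEcard subsetT /= cardsT card_in_imset; last exact: pat_inj.
by rewrite card_perm card_Rint card_Sn.
Qed.

Lemma iso_pat s j k r : perm_on Rint s -> j + k <= L ->
  isoW (pv (s * pi)%g) (a + j) r k = isoW (pv (pat s)) j r k.
Proof.
move=> hs hjk; apply: eq_forallb => u; apply: eq_forallb => v.
suff H (w : 'I_k) : exists2 t, (t \in Rint) &
   pv (s * pi)%g (a + j + w) = pi t /\ pv (pat s) (j + w) = rank (pi t).
  have [t1 ht1 [e1 f1]] := H u; have [t2 ht2 [e2 f2]] := H v.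
  by rewrite e1 e2 f1 f2 rank_mono.
have hw : j + w < L by have := ltn_ord w; lia.
exists (s (sh (Ordinal hw))); first by rewrite (perm_closed _ hs) sh_in.
split; last by rewrite (pvE (pat s) (Ordinal hw)) patE.
have := pvE (s * pi)%g (sh (Ordinal hw)); rewrite /= addnA permM => <-.
done.
Qed.

Lemma count_pat k (rho : 'S_k) : 0 < k ->
  #|[set s : 'S_n | perm_on Rint s &&
     [forall j : 'I_n, ((a <= j) && (j + k <= a + L)) ==>
                       ~~ isoW (pv (s * pi)%g) j (pv rho) k]]|
  = #|[set q : 'S_L | ~~ gcontains (oneline rho) consec_dash q]|.
Proof.
move=> hk.
have equiv s : perm_on Rint s ->
  [forall j : 'I_n, ((a <= j) && (j + k <= a + L)) ==>
                    ~~ isoW (pv (s * pi)%g) j (pv rho) k]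
  = ~~ gcontains (oneline rho) consec_dash (pat s).
  move=> hs; rewrite consecP //; apply/forallP/negP.
  - move=> H /existsP [j /andP[hj hiso]].
    have hj' : a + j < n by have := ltn_ord j; lia.
    have := H (Ordinal hj'); rewrite /= leq_addr -addnA leq_add2l hj /=.
    by rewrite iso_pat // hiso.
  - move=> H j; apply/implyP => /andP[h1 h2]; apply/negP => hiso; apply: H.
    have hj' : j - a < L by lia.
    apply/existsP; exists (Ordinal hj'); rewrite /= -(iso_pat (pv rho) hs); last by lia.
    rewrite subnKC // hiso andbT; lia.
pose Q s := [forall j : 'I_n, ((a <= j) && (j + k <= a + L)) ==>
                    ~~ isoW (pv (s * pi)%g) j (pv rho) k].
have hinj : {in [set s | perm_on Rint s && Q s] &, injective pat}.
  by move=> s1 s2; rewrite !in_set => /andP[h1 _] /andP[h2 _]; apply: pat_inj.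
rewrite -(card_in_imset hinj); apply: eq_card => q; rewrite [in RHS]in_set.
apply/imsetP/idP.
- by move=> [s]; rewrite in_set => /andP[hs hP] ->; rewrite -equiv.
- move=> hq; have : q \in [set pat s | s in perm_on Rint] by rewrite pat_onto in_set.
  case/imsetP => s hs eq; exists s => //.
  by rewrite in_set; apply/andP; split => //; rewrite /Q equiv // -eq.
Qed.

End Count.

Section Avg.
Import GRing.Theory Num.Theory.
Local Open Scope ring_scope.
Variables (n : nat) (G : 'S_n -> {set 'S_n}).
Hypothesis hG1 : forall pi, (1%g : 'S_n) \in G pi.
Hypothesis hGV : forall pi s, s \in G pi -> (s^-1)%g \in G pi.
Hypothesis hGs : forall pi s, s \in G pi -> G (s * pi)%g = G pi.

Lemma memG pi s : (s \in G (s^-1 * pi)%g) = (s \in G pi).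
Proof.
apply/idP/idP => h.
- by have := hGs h; rewrite mulVKg => ->.
- by rewrite hGs // hGV.
Qed.

Lemma swapG (h : 'S_n -> rat) :
  \sum_pi \sum_(s in G pi) h (s * pi)%g = \sum_pi h pi * (#|G pi|)%:R.
Proof.
rewrite (eq_bigr (fun pi => \sum_s (if s \in G pi then h (s * pi)%g else 0)));
  last by move=> pi _; rewrite big_mkcond.
rewrite exchange_big /=.
rewrite (eq_bigr (fun s => \sum_pi (if s \in G pi then h pi else 0))); last first.
  move=> s _; rewrite (reindex_inj (mulgI (s^-1)%g)) /=.
  by apply: eq_bigr => pi _; rewrite memG mulVKg.
rewrite exchange_big /=; apply: eq_bigr => pi _.
by rewrite -big_mkcond /= sumr_const mulr_natr.
Qed.

Lemma avgG (f : 'S_n -> rat) :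
  \sum_pi f pi = \sum_pi (\sum_(s in G pi) f (s * pi)%g) / (#|G pi|)%:R.
Proof.
have hn pi : (#|G pi|)%:R != 0 :> rat.
  by rewrite pnatr_eq0 -lt0n; apply/card_gt0P; exists 1%g.
transitivity (\sum_pi \sum_(s in G pi) (f (s * pi)%g / (#|G (s * pi)%g|)%:R)).
  rewrite (swapG (fun x => f x / (#|G x|)%:R)); apply: eq_bigr => pi _; by rewrite divfK.
apply: eq_bigr => pi _; rewrite mulr_suml; apply: eq_bigr => s hs.
by rewrite hGs.
Qed.

Lemma avg_eq (f g : 'S_n -> rat) :
  (forall pi, \sum_(s in G pi) f (s * pi)%g = \sum_(s in G pi) g (s * pi)%g) ->
  \sum_pi f pi = \sum_pi g pi.
Proof.
move=> h; rewrite avgG (avgG g); apply: eq_bigr => pi _; by rewrite h.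
Qed.
End Avg.

Section Main.
Import GRing.Theory Num.Theory.
Variables (n k l : nat) (sig : 'S_k) (tau : 'S_l).
Hypotheses (hk : 0 < k) (hl : 0 < l).
Hypothesis halpha : forall L,
  #|[set q : 'S_L | ~~ gcontains (oneline sig) consec_dash q]| =
  #|[set q : 'S_L | ~~ gcontains (oneline tau) consec_dash q]|.

Definition Hc (c : nat) (pi : 'S_n) : bool :=
  [forall e : 'I_n, runend pi e ==>
     (if e < c then RA pi e (pv tau) l else RA pi e (pv sig) k)].

Definition RR (pi : 'S_n) c := Rint n (sta (mk pi) c.+1) (c.+1 - sta (mk pi) c.+1).

Definition Gc c (pi : 'S_n) : {set 'S_n} :=
  if runend pi c then [set s | perm_on (RR pi c) s] else [set 1%g].

Lemma runend_lt (pi : 'S_n) c : runend pi c -> c < n.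
Proof. by case/andP => /mk_lt. Qed.

Lemma st_le (pi : 'S_n) c : runend pi c -> sta (mk pi) c.+1 <= c.
Proof. by case/andP => h _; rewrite /= h sta_le. Qed.

Lemma RR_mem (pi : 'S_n) c (x : 'I_n) : runend pi c ->
  (x \in RR pi c) = (sta (mk pi) c.+1 <= x < c.+1).
Proof. by move=> h; rewrite inE subnKC //; apply: leqW; apply: st_le. Qed.

Lemma pv_outR (pi : 'S_n) c s x : runend pi c -> perm_on (RR pi c) s ->
  ~~ (sta (mk pi) c.+1 <= x < c.+1) -> pv (s * pi)%g x = pv pi x.
Proof.
move=> hr hs hx; case: (ltnP x n) => hxn; last by rewrite !pv_out.
rewrite (pvE (s * pi)%g (Ordinal hxn)) (pvE pi (Ordinal hxn)) permM (out_perm hs) //.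
by rewrite RR_mem.
Qed.

Lemma mk_inv (pi : 'S_n) c s : runend pi c -> perm_on (RR pi c) s ->
  mk (s * pi)%g =1 mk pi.
Proof.
move=> hr hs z; have hcn := runend_lt hr; rewrite /mk.
apply: (transfer (p := pv pi) (p' := pv (s * pi)%g) (a := sta (mk pi) c.+1) (b := c.+1)).
- by move=> x hx; exact: (pv_outR hr hs hx).
- move=> x hx; have hxn : x < n by lia.
  exists (s (Ordinal hxn)).
    by have := perm_closed (Ordinal hxn) hs; rewrite !RR_mem // => ->.
  by rewrite (pvE (s * pi)%g (Ordinal hxn)) permM pvE.
- move=> y hy; have hyn : y < n by lia.
  have hs' := perm_onV hs.
  exists ((s^-1)%g (Ordinal hyn)).
    by have := perm_closed (Ordinal hyn) hs'; rewrite !RR_mem // => ->.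
  by rewrite pvE permM permKV (pvE pi (Ordinal hyn)).
- by have := st_le hr; lia.
- by move=> y hy; exact: (@sta_mark (mk pi) c.+1 y hy).
- by case/andP: hr.
Qed.

Lemma runend_inv (pi : 'S_n) c s e : runend pi c -> perm_on (RR pi c) s ->
  runend (s * pi)%g e = runend pi e.
Proof. by move=> hr hs; rewrite /runend !(mk_inv hr hs). Qed.

Lemma sta_inv (pi : 'S_n) c s e : runend pi c -> perm_on (RR pi c) s ->
  sta (mk (s * pi)%g) e = sta (mk pi) e.
Proof. by move=> hr hs; exact: (sta_ext e (mk_inv hr hs)). Qed.

Lemma G_inv c (pi : 'S_n) s : s \in Gc c pi -> Gc c (s * pi)%g = Gc c pi.
Proof.
rewrite /Gc; case hr: (runend pi c).
- rewrite inE => hs; rewrite (runend_inv _ hr hs) hr /RR.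
  by rewrite (sta_inv _ hr hs).
- by rewrite inE => /eqP ->; rewrite mul1g hr.
Qed.

Lemma disj (pi : 'S_n) c e x : runend pi c -> runend pi e -> e != c ->
  sta (mk pi) e.+1 <= x <= e -> ~~ (sta (mk pi) c.+1 <= x < c.+1).
Proof.
move=> /andP[hc1 hc2] /andP[he1 he2] ne hx; apply/negP => hx'.
case: (ltnP e c) => hec.
- have : mk pi e.+1.
    by apply: (@sta_mark (mk pi) c.+1 e.+1); apply/andP; split; lia.
  by rewrite (negbTE he2).
- have hce : c < e by rewrite ltn_neqAle eq_sym ne hec.
  have : mk pi c.+1.
    by apply: (@sta_mark (mk pi) e.+1 c.+1); apply/andP; split; lia.
  by rewrite (negbTE hc2).
Qed.

Lemma RA_other (pi : 'S_n) c s e r k' : runend pi c -> perm_on (RR pi c) s ->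
  runend pi e -> e != c -> RA (s * pi)%g e r k' = RA pi e r k'.
Proof.
move=> hr hs he ne; rewrite /RA (sta_inv _ hr hs).
apply: eq_forallb => j; case hg: (_ && _); rewrite ?implyTb ?implyFb //; congr negb.
move/andP: hg => [hg1 hg2].
apply: eq_forallb => u; apply: eq_forallb => v.
have hpos (w : 'I_k') : pv (s * pi)%g (j + w) = pv pi (j + w).
  apply: (pv_outR hr hs); apply: (disj hr he ne).
  by move: (ltn_ord w) => hw; apply/andP; split; lia.
by rewrite !hpos.
Qed.

Definition Qc c (pi : 'S_n) :=
  [forall e : 'I_n, ((e : nat) != c) ==> runend pi e ==>
     (if e < c then RA pi e (pv tau) l else RA pi e (pv sig) k)].

Lemma Hsplit t c (pi : 'S_n) s : runend pi c -> perm_on (RR pi c) s ->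
  (forall e, e != c -> (e < t) = (e < c)) ->
  Hc t (s * pi)%g = Qc c pi &&
     (if c < t then RA (s * pi)%g c (pv tau) l else RA (s * pi)%g c (pv sig) k).
Proof.
move=> hr hs ht; have hcn := runend_lt hr.
apply/forallP/andP.
- move=> H; split.
  + apply/forallP => e; apply/implyP => ne; apply/implyP => re.
    have := implyP (H e); rewrite (runend_inv _ hr hs) re => /(_ isT).
    by rewrite ht //; case: ifP => _; rewrite (RA_other _ _ hr hs re ne).
  + by have := implyP (H (Ordinal hcn)); rewrite (runend_inv _ hr hs) hr => /(_ isT).
- move=> [hQ hc] e; apply/implyP; rewrite (runend_inv _ hr hs) => re.
  case: (eqVneq (e : nat) c) => [ec | ne].
    by rewrite ec.
  have := implyP (implyP (forallP hQ e) ne) re.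
  by rewrite ht //; case: ifP => _; rewrite (RA_other _ _ hr hs re ne).
Qed.

Lemma sum_card (P b : 'S_n -> bool) :
  (\sum_(s in [set s | P s]) ((b s)%:R : rat) = (#|[set s | P s && b s]|)%:R)%R.
Proof.
rewrite -sum1_card natr_sum big_mkcond [RHS]big_mkcond /=.
by apply: eq_bigr => s _; rewrite !inE; case: (P s); case: (b s).
Qed.

Lemma inner_count c (pi : 'S_n) k' (rho : 'S_k') : 0 < k' -> runend pi c ->
  #|[set s | perm_on (RR pi c) s && RA (s * pi)%g c (pv rho) k']|
  = #|[set q : 'S_(c.+1 - sta (mk pi) c.+1) | ~~ gcontains (oneline rho) consec_dash q]|.
Proof.
move=> hk' hr.
have haL : sta (mk pi) c.+1 + (c.+1 - sta (mk pi) c.+1) <= n.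
  by have := st_le hr; have := runend_lt hr; lia.
rewrite -(count_pat pi haL rho hk'); apply: eq_card => s; rewrite !inE.
case hs: (perm_on _ s) => //=.
rewrite /RA (sta_inv _ hr hs) subnKC //; apply: leqW; exact: st_le.
Qed.

Lemma step c : (\sum_(pi : 'S_n) ((Hc c pi)%:R : rat) = \sum_pi (Hc c.+1 pi)%:R)%R.
Proof.
apply: (avg_eq (G := Gc c)).
- by move=> pi; rewrite /Gc; case: runend; rewrite inE ?perm_on1 ?eqxx.
- move=> pi s; rewrite /Gc; case: runend; rewrite !inE; first exact: perm_onV.
  by move/eqP ->; rewrite invg1.
- exact: G_inv.
- move=> pi; rewrite /Gc; case hr: (runend pi c); last first.
    rewrite !big_set1 mul1g; congr ((_%:R)%R).
    congr (nat_of_bool _); rewrite /Hc.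
    apply/idP/idP => /forallP H; apply/forallP => e; have := H e; case re: (runend pi e) => //=.
      have ne : (e : nat) != c by apply/eqP => ec; rewrite -ec re in hr.
      have h2 : (e <= c) = (e < c) by rewrite leq_eqVlt (negbTE ne).
      by rewrite ?ltnS ?h2.
    have ne : (e : nat) != c by apply/eqP => ec; rewrite -ec re in hr.
    have h2 : (e <= c) = (e < c) by rewrite leq_eqVlt (negbTE ne).
    by rewrite ?ltnS ?h2.
  rewrite (eq_bigr (fun s => ((Qc c pi && RA (s * pi)%g c (pv sig) k)%:R : rat)%R)); last first.
    by move=> s; rewrite inE => hs; rewrite (Hsplit hr hs) ?ltnn.
  rewrite [RHS](eq_bigr (fun s => ((Qc c pi && RA (s * pi)%g c (pv tau) l)%:R : rat)%R)); last first.
    move=> s; rewrite inE => hs; rewrite (Hsplit hr hs) ?ltnSn //.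
    by move=> e ne; rewrite ltnS leq_eqVlt (negbTE ne).
  rewrite !sum_card; case: (Qc c pi) => /=; last first.
    by congr ((_%:R)%R); apply: eq_card => s; rewrite !inE !andbF.
  congr ((_%:R)%R).
  by rewrite (inner_count sig hk hr) (inner_count tau hl hr) halpha.
Qed.

Lemma chain c : (\sum_(pi : 'S_n) ((Hc 0 pi)%:R : rat) = \sum_pi (Hc c pi)%:R)%R.
Proof. by elim: c => // c ->; apply: step. Qed.

Lemma Hc0 (pi : 'S_n) : Hc 0 pi = [forall e : 'I_n, runend pi e ==> RA pi e (pv sig) k].
Proof. by apply/forallP/forallP => H e; have := H e; rewrite ltn0. Qed.

Lemma Hcn (pi : 'S_n) : Hc n pi = [forall e : 'I_n, runend pi e ==> RA pi e (pv tau) l].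
Proof. by apply/forallP/forallP => H e; have := H e; rewrite ltn_ord. Qed.

Lemma main_count :
  #|[set pi : 'S_n | ~~ gcontains (twelve_word sig) twelve_dash pi]| =
  #|[set pi : 'S_n | ~~ gcontains (twelve_word tau) twelve_dash pi]|.
Proof.
apply/eqP; rewrite -(eqr_nat rat); apply/eqP.
rewrite -!sum1_card !natr_sum !big_mkcond /=.
transitivity (\sum_(pi : 'S_n) ((Hc 0 pi)%:R : rat))%R.
  apply: eq_bigr => pi _; rewrite inE avoid12 // -Hc0; by case: (Hc 0 pi).
rewrite (chain n) [RHS]big_mkcond; apply: eq_bigr => pi _; rewrite inE avoid12 // -Hcn; by case: (Hc n pi).
Qed.
End Main.
Import GRing.Theory Num.Theory.

Theorem mainTheorem7 (k l : nat) (sigma : 'S_k) (tau : 'S_l) :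
  (0 < k)%N -> (0 < l)%N ->
  egf (oneline sigma) consec_dash = egf (oneline tau) consec_dash ->
  egf (twelve_word sigma) twelve_dash = egf (twelve_word tau) twelve_dash.
Proof.
move=> hk hl E.
have halpha L : #|[set q : 'S_L | ~~ gcontains (oneline sigma) consec_dash q]| =
                #|[set q : 'S_L | ~~ gcontains (oneline tau) consec_dash q]|.
  have hL : ((L`!)%:R : rat)%R != 0%R by rewrite pnatr_eq0 -lt0n fact_gt0.
  have := congr1 (fun f => f L * (L`!)%:R)%R E; rewrite /egf !divfK // => /eqP.
  by rewrite eqr_nat /alpha => /eqP.
apply: functional_extensionality => m; rewrite /egf /alpha.
by rewrite (main_count m hk hl halpha).
Qed.
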